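(* Let $k,l,m,n$ be positive integers with $k^n\equiv 1\pmod m$ and $l(k-1)\equiv 0\pmod m$, and let $G=\langle a,b;\ a^m=1,\ b^n=a^l,\ b^{-1}ab=a^k\rangle$. Then $G$ has trivial centre if and only if $(m,k-1)=1$ and $n=\mathrm{ind}_m(k)$.
   Context: $\mathrm{ind}_m(k)$ is the least positive integer $d$ with $k^d\equiv 1\pmod m$. *)

(* Defs.v *)
From mathcomp Require Import all_boot all_fingroup.
Set Implicit Arguments. Unset Strict Implicit. Unset Printing Implicit Defensive.

Definition is_ind (m k d : nat) : Prop :=
  [/\ 0 < d, k ^ d = 1 %[mod m] &
      forall e, 0 < e -> k ^ e = 1 %[mod m] -> d <= e].

(* Main.v *)
Require Import Defs.
From mathcomp Require Import all_boot all_fingroup all_solvable.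
Set Implicit Arguments. Unset Strict Implicit. Unset Printing Implicit Defensive.
Section Model.
Variables k l m n : nat.
Hypotheses (k_gt0 : 0 < k) (m_gt0 : 0 < m) (n_gt0 : 0 < n)
  (hkn : k ^ n = 1 %[mod m]) (hlk : l * (k - 1) = 0 %[mod m]).

Definition T := ('I_m * 'I_n)%type.

Definition fA (x : T) : T := (Ordinal (ltn_pmod x.1.+1 m_gt0), x.2).
Definition fB (x : T) : T :=
  (Ordinal (ltn_pmod (x.1 * k + (x.2.+1 == n) * l) m_gt0),
   Ordinal (ltn_pmod x.2.+1 n_gt0)).

Lemma pairE (x y : T) : x.1 = y.1 :> nat -> x.2 = y.2 :> nat -> x = y.
Proof. by case: x y => [x1 x2] [y1 y2] /= /val_inj -> /val_inj ->. Qed.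

Lemma lk_mod : l * k = l %[mod m].
Proof.
have -> : l * k = l * (k - 1) + l by rewrite -mulnSr subn1 prednK.
by rewrite -modnDml hlk mod0n add0n.
Qed.

Lemma lkX_mod e : l * k ^ e = l %[mod m].
Proof.
elim: e => [|e IH]; first by rewrite muln1.
by rewrite expnS mulnA -modnMml lk_mod modnMml IH.
Qed.

Lemma fA_inj : injective fA.
Proof.
move=> [x1 x2] [y1 y2] /= [] H ->; congr pair; apply: val_inj => /=.
have lx := ltn_ord x1; have ly := ltn_ord y1.
move: H; rewrite -[x1.+1]addn1 -[y1.+1]addn1 => /eqP; rewrite eqn_modDr !modn_small //.
by move/eqP.
Qed.

Lemma fB_inj : injective fB.
Proof.
move=> [x1 x2] [y1 y2] [] /= H H2.
have lx2 := ltn_ord x2; have ly2 := ltn_ord y2.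
have e2 : x2 = y2.
  apply: val_inj; move: H2 => /eqP; rewrite -[x2.+1]addn1 -[y2.+1]addn1 eqn_modDr !modn_small //.
  by move/eqP.
subst y2; congr pair; apply: val_inj => /=.
have lx := ltn_ord x1; have ly := ltn_ord y1.
move: H => /eqP; rewrite eqn_modDr => /eqP H.
have : x1 * k ^ n = y1 * k ^ n %[mod m].
  have -> : n = (n.-1).+1 by rewrite prednK.
  by rewrite expnS !mulnA -modnMml H modnMml.
by rewrite -modnMmr hkn modnMmr -[in RHS]modnMmr hkn modnMmr !muln1 !modn_small.
Qed.

Definition PA : {perm T} := perm fA_inj.
Definition PB : {perm T} := perm fB_inj.

Lemma modS_mod a d : (a %% d).+1 %% d = a.+1 %% d.
Proof. by rewrite -[(a %% d).+1]addn1 -[a.+1]addn1 modnDml. Qed.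

Lemma addmod a a' b b' d : a = a' %[mod d] -> b = b' %[mod d] -> a + b = a' + b' %[mod d].
Proof. by move=> h1 h2; rewrite -modnDm h1 h2 modnDm. Qed.

Lemma mulmod a a' b b' d : a = a' %[mod d] -> b = b' %[mod d] -> a * b = a' * b' %[mod d].
Proof. by move=> h1 h2; rewrite -modnMm h1 h2 modnMm. Qed.

Lemma PAX i (x : T) : (PA ^+ i)%g x = (Ordinal (ltn_pmod (x.1 + i) m_gt0), x.2).
Proof.
rewrite permX; elim: i => [|i IH] /=.
  by apply: pairE => //=; rewrite addn0 modn_small.
rewrite IH permE; apply: pairE => //=.
by rewrite modS_mod addnS.
Qed.

Lemma div_succ q r : r < n -> (q * n + r).+1 %/ n = q + (r.+1 == n).
Proof.
move=> rn; case: eqP => [<-|ne].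
  by rewrite -addnS -mulSnr mulnK // addn1.
have rn' : r.+1 < n by rewrite ltn_neqAle rn andbT; apply/eqP.
by rewrite -addnS divnMDl // divn_small // addn0.
Qed.

Lemma PBX t (x : T) : (PB ^+ t)%g x =
  (Ordinal (ltn_pmod (x.1 * k ^ t + l * ((x.2 + t) %/ n)) m_gt0),
   Ordinal (ltn_pmod (x.2 + t) n_gt0)).
Proof.
rewrite permX; elim: t => [|t IH] /=.
  apply: pairE => /=; rewrite ?addn0 ?muln1 ?divn_small ?muln0 ?addn0 ?modn_small //.
rewrite IH permE; apply: pairE => /=; last by rewrite modS_mod addnS.
rewrite addnS; set s := x.2 + t.
have Hs : s = s %/ n * n + s %% n by rewrite -divn_eq.
have -> : (s.+1 %/ n) = s %/ n + ((s %% n).+1 == n).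
  by rewrite {1}Hs div_succ // ltn_pmod.
rewrite -modnDml modnMml modnDml mulnDl expnSr mulnA -addnA mulnDr.
apply: addmod => //.
apply: addmod; last by rewrite mulnC.
by rewrite mulnAC -modnMml lk_mod modnMml.
Qed.

Lemma R1 : (PA ^+ m)%g = 1%g.
Proof.
apply/permP => x; rewrite PAX perm1; apply: pairE => //=.
by rewrite modnDr modn_small.
Qed.

Lemma R2 : (PB ^+ n)%g = (PA ^+ l)%g.
Proof.
apply/permP => x; rewrite PAX PBX; apply: pairE => /=; last first.
  by rewrite modnDr modn_small.
have -> : (x.2 + n) %/ n = 1.
  by rewrite -[n in x.2 + n]mul1n addnC divnMDl // divn_small.
apply: addmod; last by rewrite muln1.
by rewrite -modnMmr hkn modnMmr muln1.
Qed.

Lemma R3 : (PA ^ PB)%g = (PA ^+ k)%g.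
Proof.
have H : (PA * PB = PB * PA ^+ k)%g.
  apply/permP => x; rewrite !permM PAX !permE; apply: pairE => //=.
  rewrite modnDml -addnA [_ * l + k]addnC addnA; apply: addmod => //.
  by rewrite modnMml mulSn addnC.
by rewrite /conjg H mulgA mulVg mul1g.
Qed.

Definition MG := (<[PA]> <*> <[PB]>)%G.

Lemma PA_in : PA \in MG.
Proof. exact: (subsetP (joing_subl _ _)) _ (cycle_id PA). Qed.
Lemma PB_in : PB \in MG.
Proof. exact: (subsetP (joing_subr _ _)) _ (cycle_id PB). Qed.

Lemma model_card : m * n <= #|MG|.
Proof.
pose x0 : T := (Ordinal m_gt0, Ordinal n_gt0).
have -> : m * n = #|[set: T]| by rewrite cardsT card_prod !card_ord.
apply: leq_trans (leq_imset_card (fun g : {perm T} => g x0) MG).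
apply: subset_leq_card; apply/subsetP => [[i j]] _.
apply/imsetP; exists (PB ^+ j * PA ^+ i)%g.
  by rewrite groupM ?groupX ?PA_in ?PB_in.
rewrite permM PAX PBX; apply: pairE => /=.
  by rewrite mul0n !add0n divn_small // muln0 mod0n add0n modn_small.
by rewrite add0n modn_small.
Qed.

Lemma model_homg :
  (MG \homg Grp (a : b : a ^+ m, b ^+ n = a ^+ l, a ^ b = a ^+ k))%g.
Proof.
apply/existsP; exists (PA, PB); rewrite /= !xpair_eqE.
by rewrite eqxx R1 R2 R3 !eqxx.
Qed.
End Model.

Lemma exists_model k l m n : 0 < k -> 0 < m -> 0 < n ->
  k ^ n = 1 %[mod m] -> l * (k - 1) = 0 %[mod m] ->
  exists (rT : finGroupType) (H : {group rT}), m * n <= #|H| /\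
  (H \homg Grp (a : b : a ^+ m, b ^+ n = a ^+ l, a ^ b = a ^+ k))%g.
Proof.
move=> k0 m0 n0 h1 h2.
exists _, (@MG k l m n m0 n0 h1); split.
  exact: model_card.
exact: model_homg.
Qed.

Lemma commJ (gT : finGroupType) (x y : gT) : commute x y <-> (x ^ y = x)%g.
Proof.
split => [h | h]; first by rewrite /conjg h mulKg.
by rewrite /commute conjgC h.
Qed.

Unset Implicit Arguments.
Set Strict Implicit.

Theorem lemma2p2 (k l m n : nat) (gT : finGroupType) (G : {group gT}) :
  (0 < k)%N -> (0 < l)%N -> (0 < m)%N -> (0 < n)%N ->
  (k ^ n = 1 %[mod m])%N -> (l * (k - 1) = 0 %[mod m])%N ->
  (G \isog Grp (a : b : a ^+ m, b ^+ n = a ^+ l, a ^ b = a ^+ k))%g ->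
  (('Z(G))%g = 1%g <-> coprime m (k - 1) /\ is_ind m k n).
Proof.
move=> k0 l0 m0 n0 hkn hlk iso.
have [rT [H [cardH homH]]] := exists_model k0 m0 n0 hkn hlk.
have HG : (H \homg G)%g by rewrite iso.
have cardG : m * n <= #|G| := leq_trans cardH (leq_homg HG).
have := isoGrp_hom iso; case/existsP => -[a b] /=; rewrite !xpair_eqE /=.
case/and4P => /eqP defG /eqP am /eqP bn /eqP ab.
Open Scope group_scope.
have aG : a \in G by rewrite -defG (subsetP (joing_subl _ _)) ?cycle_id.
have bG : b \in G by rewrite -defG (subsetP (joing_subr _ _)) ?cycle_id.
have conjX j : a ^ (b ^+ j) = a ^+ (k ^ j).
  elim: j => [|j IH]; first by rewrite conjg1 expn0 expg1.
  by rewrite expgSr conjgM IH conjXg ab -expgM expnS.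
have nab : <[b]> \subset 'N(<[a]>).
  rewrite cycle_subG inE -cycleJ ab cycle_subG mem_cycle //.
pose F := fun x : 'I_m * 'I_n => a ^+ x.1 * b ^+ x.2.
have Gsub : (G : {set gT}) \subset F @: setT.
  apply/subsetP => z; rewrite -defG norm_joinEr //.
  case/mulsgP => u v /cycleP[i ->] /cycleP[j ->] ->.
  apply/imsetP; exists (Ordinal (ltn_pmod (i + l * (j %/ n)) m0), Ordinal (ltn_pmod j n0)) => //.
  rewrite /F /= (expg_mod _ am) {1}(divn_eq j n) expgD mulnC expgM bn -expgM.
  by rewrite mulgA -expgD.
have Finj : forall x y, F x = F y -> x = y.
  have := leq_trans (subset_leq_card Gsub) (leq_imset_card F setT).
  rewrite cardsT card_prod !card_ord => h.
  have /imset_injP Fi : #|F @: setT| == #|[set: 'I_m * 'I_n]|.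
    rewrite cardsT card_prod !card_ord eqn_leq.
    rewrite (leq_trans (leq_imset_card F setT)) ?cardsT ?card_prod ?card_ord //.
    exact: leq_trans cardG (subset_leq_card Gsub).
  by move=> x y; apply: Fi; rewrite inE.
have C1 : forall i i', a ^+ i = a ^+ i' -> i = i' %[mod m].
  move=> i i' e.
  have := Finj (Ordinal (ltn_pmod i m0), Ordinal n0) (Ordinal (ltn_pmod i' m0), Ordinal n0).
  rewrite /F /= !expg0 !mulg1 !(expg_mod _ am) => /(_ e) [].
  by [].
have C3 : forall e, 0 < e < n -> b ^+ e != 1.
  move=> e /andP[e0 en]; apply/eqP => be.
  have := Finj (Ordinal m0, Ordinal en) (Ordinal m0, Ordinal n0).
  rewrite /F /= !expg0 !mul1g be => /(_ erefl) [] e00.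
  by rewrite e00 in e0.
have Zin : forall z, z \in G -> commute a z -> commute b z -> z \in 'Z(G).
  move=> z zG az bz; rewrite /center inE zG /= -sub_cent1 -defG join_subG !cycle_subG.
  by apply/andP; split; apply/cent1P.
have Zout : forall z, z \in 'Z(G) -> [/\ z \in G, commute a z & commute b z].
  move=> z; rewrite /center inE => /andP[zG]; rewrite -sub_cent1 => sG.
  have := sG; rewrite -{1}defG join_subG !cycle_subG => /andP[/cent1P h1 /cent1P h2].
  by split.
split=> [hZ | [cop [_ _ ind]]].
  have Z1 : forall z, z \in G -> commute a z -> commute b z -> z = 1.
    by move=> z zG az bz; have := Zin z zG az bz; rewrite hZ inE => /eqP.
  split.
    set g := gcdn m (k - 1); set q := m %/ g.
    have g0 : 0 < g by rewrite gcdn_gt0 m0.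
    have gm : g %| m by apply: dvdn_gcdl.
    have gk : g %| k - 1 by apply: dvdn_gcdr.
    have qg : (q * g)%N = m by rewrite divnK.
    have aq1 : a ^+ q = 1.
      apply: Z1; first by rewrite groupX.
        exact: commuteX (commute_refl a).
      apply: commute_sym; apply/commJ.
      rewrite conjXg ab -expgM.
      have -> : (k * q = (k - 1) * q + q)%N.
        by rewrite addnC -mulSn subn1 prednK.
      have : m %| (k - 1) * q.
        by rewrite -(divnK gk) -mulnA [(g * q)%N]mulnC qg dvdn_mull.
      case/dvdnP => c ->; rewrite expgD mulnC expgM am expg1n mul1g //.
    have := C1 q 0; rewrite expg0 => /(_ aq1); rewrite mod0n => /eqP mq0.
    have mq : m %| q by rewrite /dvdn mq0.
    have q0 : 0 < q by rewrite divn_gt0 // dvdn_leq.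
    have := dvdn_leq q0 mq => le; rewrite /coprime -/g.
    rewrite eqn_leq g0 andbT leqNgt; apply/negP => g2.
    have h2 : (q * 2 <= q * g)%N by rewrite leq_pmul2l.
    rewrite qg in h2; have := leq_trans h2 le.
    by rewrite -{2}(muln1 q) leq_pmul2l.
  split => // e e0 he; rewrite leqNgt; apply/negP => en.
  have := C3 e; rewrite e0 en => /(_ erefl); apply/negP; rewrite negbK.
  apply/eqP; apply: Z1; first by rewrite groupX.
    apply/commJ; rewrite conjX -(expg_mod _ am) he (expg_mod _ am) expg1 //.
  exact: commuteX (commute_refl b).
apply/trivgP/subsetP => z /Zout [zG az bz]; rewrite inE.
case/imsetP: (subsetP Gsub z zG) => -[i j] _ ze; rewrite ze /F /= in az bz *.
have abj : commute a (b ^+ j).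
  have ai : commute a (a ^+ i) by exact: commuteX (commute_refl a).
  apply: (mulgI (a ^+ i)); rewrite /commute in az ai *.
  by rewrite mulgA -ai -mulgA az mulgA.
have := abj => /commJ; rewrite conjX -{2}(expg1 a) => /C1 hj.
have j0 : val j = 0.
  apply/eqP; rewrite eqn0Ngt; apply/negP => j0.
  by have := ind j j0 hj; rewrite leqNgt ltn_ord.
rewrite j0 expg0 mulg1 in bz *.
have := commute_sym bz => /commJ; rewrite conjXg ab -expgM => /C1 hi.
have : (i * (k - 1) + i = 0 + i %[mod m])%N.
  by rewrite add0n -mulnSr subn1 prednK // mulnC.
move/eqP; rewrite eqn_modDr mod0n => h.
have : m %| (k - 1) * i by rewrite mulnC.
rewrite Gauss_dvdr // => /eqP im.
by rewrite -(expg_mod _ am) im expg0.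
Qed.
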